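(* Suppose Assumption 2 holds. Consider the $N$-armed system at time $t$ and suppose the OLC condition holds for the set of all $N$ arms, i.e. with $n=N$ and $z(s)=NX_t([N],s)$. If all $N$ arms take actions according to Optimal Local Control applied to $[N]$, then $$\mathbb E\big[X_{t+1}([N])-\mu^*\,\big|\,X_t\big]=(X_t([N])-\mu^* )\Phi .$$
   Context: Single-armed MDP $(\mathbb S,\mathbb A,P,r)$ with finite $\mathbb S$, $\mathbb A=\{0,1\}$, budget fraction $\alpha\in(0,1)$; in the $N$-armed system ($\alpha N$ integer) arms transition independently according to $P$ given their states and actions. $S_t(i)$ is the state of arm $i$ at time $t$; for $D\subseteq[N]$, $X_t(D)=(X_t(D,s))_s$ with $X_t(D,s)=\frac1N\#\{i\in D:S_t(i)=s\}$ (row vector). LP relaxation: maximize $\sum_{s,a}r(s,a)y(s,a)$ over $y\ge0$ subject to $\sum_sy(s,1)=\alpha$, $\sum_{s',a}y(s',a)P(s',a,s)=\sum_ay(s,a)$ for all $s$, $\sum_{s,a}y(s,a)=1$; $y^*$ is a fixed optimal solution. $\bar\pi^*(a|s)=y^*(s,a)/(y^*(s,0)+y^*(s,1))$ if the denominator is positive, else $1/2$; $P_{\bar\pi^*}(s,s')=\sum_a\bar\pi^*(a|s)P(s,a,s')$; $\mu^*(s)=y^*(s,0)+y^*(s,1)$ (row vector). Assumption 2: there is a unique state $\tilde s$ with $y^*(\tilde s,0)>0$, $y^*(\tilde s,1)>0$. $\Phi=P_{\bar\pi^*}-\mathbf 1^\top\mu^*-(c-\alpha\mathbf 1)^\top(P_1(\tilde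 s)-P_0(\tilde s))$ with $c=(\bar\pi^*(1|s))_s$, $P_a(\tilde s)=(P(\tilde s,a,s))_s$, $\mathbf 1$ the all-ones row vector. $S^+=\{s:y^*(s,1)>0,y^*(s,0)=0\}$, $S^-=\{s:y^*(s,1)=0,y^*(s,0)>0\}$, $S^\emptyset=\{s:y^*(s,1)=y^*(s,0)=0\}$. Randomized rounding of $c\ge0$: $\lceil c\rceil$ w.p. $c-\lfloor c\rfloor$, else $\lfloor c\rfloor$. Optimal Local Control (OLC) applied to a set of $n$ arms with $z(s)$ arms in state $s$, defined under the OLC condition $\sum_{s\neq\tilde s}\bar\pi^*(1|s)z(s)\le\alpha n-|S^\emptyset|-1$ and $\sum_{s\neq\tilde s}\bar\pi^*(0|s)z(s)\le(1-\alpha)n-|S^\emptyset|-1$: let $B$ be a randomized rounding of $\alpha n$; activate all arms in $S^+$, none in $S^-$, a randomized rounding of $z(s)/2$ arms in each $s\in S^\emptyset$, and arms in state $\tilde s$ so that exactly $B$ arms are active. *)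

(* Defs.v *)
From HB Require Import structures.
From mathcomp Require Import all_boot all_order all_algebra.
Set Implicit Arguments. Unset Strict Implicit. Unset Printing Implicit Defensive.
Import Order.TTheory GRing.Theory Num.Theory.
Local Open Scope ring_scope.

Section Defs.
Variables (R : archiRealFieldType) (S : finType).

(* single-armed kernel P s a s' ; actions: false = 0 (passive), true = 1 (active) *)
Definition stochastic (P : S -> bool -> S -> R) : Prop :=
  (forall s a s', 0 <= P s a s') /\ (forall s a, \sum_(s' : S) P s a s' = 1).

Definition lp_feasible (P : S -> bool -> S -> R) (alpha : R) (y : S -> bool -> R) : Prop :=
  [/\ (forall s a, 0 <= y s a),
      \sum_(s : S) y s true = alpha,
      (forall s, \sum_(s' : S) \sum_(a : bool) y s' a * P s' a s = \sum_(a : bool) y s a)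
    & \sum_(s : S) \sum_(a : bool) y s a = 1].

Definition lp_obj (r : S -> bool -> R) (y : S -> bool -> R) : R :=
  \sum_(s : S) \sum_(a : bool) r s a * y s a.

Definition lp_optimal P r alpha (y : S -> bool -> R) : Prop :=
  lp_feasible P alpha y /\ forall y', lp_feasible P alpha y' -> lp_obj r y' <= lp_obj r y.

Definition pibar (y : S -> bool -> R) (a : bool) (s : S) : R :=
  if 0 < y s false + y s true then y s a / (y s false + y s true) else 1 / 2.

Definition mustar (y : S -> bool -> R) (s : S) : R := y s false + y s true.

Definition Ppibar (P : S -> bool -> S -> R) y (s s' : S) : R :=
  \sum_(a : bool) pibar y a s * P s a s'.

Definition Phi P y (alpha : R) (st : S) (s s' : S) : R :=
  Ppibar P y s s' - mustar y s' - (pibar y true s - alpha) * (P st true s' - P st false s').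

Definition Splus (y : S -> bool -> R) : pred S := fun s => (0 < y s true) && (y s false == 0).
Definition Sminus (y : S -> bool -> R) : pred S := fun s => (y s true == 0) && (0 < y s false).
Definition Sempty (y : S -> bool -> R) : pred S := fun s => (y s true == 0) && (y s false == 0).

(* probability mass function of the randomized rounding of c >= 0, on nat *)
Definition rround_pmf (c : R) (k : nat) : R :=
  (if k%:Z == Num.floor c then 1 - (c - (Num.floor c)%:~R) else 0)
  + (if k%:Z == Num.ceil c then c - (Num.floor c)%:~R else 0).

Variable N : nat.
Definition config := {ffun 'I_N -> S}.
Definition actvec := {ffun 'I_N -> bool}.

Definition zcount (x : config) (s : S) : nat := #|[set i | x i == s]|.

Definition Xfrac (x : config) (s : S) : R := (zcount x s)%:R / N%:R.

Definition nactive_in (x : config) (u : actvec) (s : S) : nat :=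
  #|[set i | (x i == s) && u i]|.
Definition nactive (u : actvec) : nat := #|[set i | u i]|.

Definition olc_condition y (alpha : R) (st : S) (x : config) : Prop :=
  (\sum_(s : S | s != st) pibar y true s * (zcount x s)%:R
     <= alpha * N%:R - (#|Sempty y|)%:R - 1)
  /\ (\sum_(s : S | s != st) pibar y false s * (zcount x s)%:R
     <= (1 - alpha) * N%:R - (#|Sempty y|)%:R - 1).

Definition is_distr (T : finType) (pi : T -> R) : Prop :=
  (forall t, 0 <= pi t) /\ \sum_(t : T) pi t = 1.

Definition OLC_law y (alpha : R) (x : config) (pi : actvec -> R) : Prop :=
  [/\ is_distr pi,
      (forall u, pi u != 0 -> forall i,
          (Splus y (x i) -> u i = true) /\ (Sminus y (x i) -> u i = false)),
      (forall k, \sum_(u : actvec | nactive u == k) pi u = rround_pmf (alpha * N%:R) k)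
    &
      (forall s, Sempty y s -> forall k,
          \sum_(u : actvec | nactive_in x u s == k) pi u
            = rround_pmf ((zcount x s)%:R / 2) k)].

Definition trans_prob (P : S -> bool -> S -> R) (x : config) (u : actvec) (x' : config) : R :=
  \prod_(i : 'I_N) P (x i) (u i) (x' i).

Definition expected_next P (x : config) (pi : actvec -> R) (s' : S) : R :=
  \sum_(u : actvec) pi u * \sum_(x' : config) trans_prob P x u x' * Xfrac x' s'.

End Defs.

Arguments Xfrac {R S N} x s.
Arguments zcount {S N} x s.
Arguments olc_condition {R S N} y alpha st x.
Arguments OLC_law {R S N} y alpha x pi.
Arguments expected_next {R S N} P x pi s'.

(* Main.v *)
Require Import Defs.
From HB Require Import structures.
From mathcomp Require Import all_boot all_order all_algebra ring.
Import Order.TTheory GRing.Theory Num.Theory.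
Local Open Scope ring_scope.

Lemma card_ind (R : pzRingType) (T : finType) (b : pred T) :
  ((#|[set i | b i]|)%:R : R) = \sum_i (b i)%:R.
Proof.
rewrite -sum1_card natr_sum big_mkcond /=; apply: eq_bigr => i _.
by rewrite inE; case: (b i).
Qed.

Lemma marginal (R : comPzRingType) (I J : finType) (Q : I -> J -> R) (j : I) (s' : J) :
  (forall i, \sum_t Q i t = 1) ->
  \sum_(f : {ffun I -> J}) (\prod_i Q i (f i)) * (f j == s')%:R = Q j s'.
Proof.
move=> hQ.
pose Q' i t := Q i t * (if i == j then (t == s')%:R else 1).
transitivity (\sum_(f : {ffun I -> J}) \prod_i Q' i (f i)).
  apply: eq_bigr => f _; rewrite (bigD1 j) //= [in RHS](bigD1 j) //= /Q' eqxx.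
  rewrite mulrAC; congr (_ * _).
  by apply: eq_bigr => i /negbTE ->; rewrite mulr1.
rewrite -bigA_distr_bigA (bigD1 j) //= [X in _ * X]big1 ?mulr1.
  rewrite /Q' eqxx (bigD1 s') //= eqxx mulr1 big1 ?addr0 // => t /negbTE ->.
  by rewrite mulr0.
by move=> i /negbTE hi; rewrite /Q' hi; under eq_bigr do rewrite mulr1; exact: hQ.
Qed.

Lemma next_u (R : archiRealFieldType) (S : finType) (N : nat) (P : S -> bool -> S -> R)
   (x : config S N) (u : actvec N) (s' : S) :
  stochastic P ->
  \sum_(x' : config S N) trans_prob P x u x' * Xfrac x' s'
  = (\sum_i P (x i) (u i) s') / N%:R.
Proof.
case=> _ hP.
rewrite /Xfrac /zcount.
under eq_bigr do rewrite card_ind mulrA mulr_sumr.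
rewrite -big_distrl /=; congr (_ / _).
rewrite exchange_big /=; apply: eq_bigr => j _.
rewrite /trans_prob.
exact: (@marginal R _ _ (fun i t => P (x i) (u i) t) j s' (fun i => hP _ _)).
Qed.
Lemma sum_ind_nat (R : archiRealFieldType) (M n : nat) : (n < M)%N ->
  \sum_(k < M) (k%:R : R) * (val k == n)%:R = n%:R.
Proof.
move=> hn; rewrite (bigD1 (Ordinal hn)) //= eqxx mulr1 big1 ?addr0 // => k hk.
have -> : (val k == n) = false.
  by apply/negbTE; apply: contra hk => /eqP h; apply/eqP/val_inj.
by rewrite mulr0.
Qed.

Lemma rround_mean (R : archiRealFieldType) (c : R) (M : nat) :
  0 <= c -> c <= M%:R ->
  \sum_(k < M.+1) (k%:R : R) * rround_pmf c k = c.
Proof.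
move=> c0 cM.
have : (0 <= Num.floor c)%R by rewrite floor_ge0.
case E: (Num.floor c) => [n|n] // _.
have hc := ceil_floor c; rewrite E in hc.
have fl := floor_itv c; rewrite E in fl.
have nM : (n <= M)%N.
  have : (n%:R : R) <= M%:R by apply: le_trans cM; case/andP: fl.
  by rewrite ler_nat.
set b := (c \isn't a Num.int) in hc.
have bd : (b%:R : R) * (c - n%:R) = c - n%:R.
  rewrite /b; case: (boolP (c \is a Num.int)) => ci /=.
    by rewrite mul0r -{1}(floorK ci) E /= subrr.
  by rewrite mul1r.
have hp : forall k, rround_pmf c k = (k == n)%:R * (1 - (c - n%:R)) + (k == (n + b)%N)%:R * (c - n%:R).
  move=> k; rewrite /rround_pmf E hc.
  have -> : (Posz n + b)%R = Posz (n + b)%N by rewrite PoszD.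
  rewrite !eqz_nat /=.
  by case: (k == n); case: (k == (n+b)%N); rewrite /= ?mul1r ?mul0r.
rewrite (eq_bigr (fun k : 'I_M.+1 => ((k%:R) * (val k == n)%:R) * (1 - (c - n%:R)) + (k%:R * (val k == (n+b)%N)%:R) * (c - n%:R))); last first.
  by move=> k _; rewrite hp mulrDr !mulrA.
rewrite big_split /= -!mulr_suml !sum_ind_nat //; last first.
  rewrite ltnS; rewrite /b; case: (boolP (c \is a Num.int)) => ci /=; first by rewrite addn0.
  rewrite addn1.
  have : (n%:R : R) < M%:R.
    apply: lt_le_trans cM; rewrite lt_neqAle; case/andP: fl => -> _; rewrite andbT.
    apply/eqP=> h; move/negP: ci; apply; rewrite -h; exact: natr_int.
  by rewrite ltr_nat.
rewrite natrD mulrDl bd; ring.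
Qed.

Lemma expect_nat (R : archiRealFieldType) (T : finType) (pi : T -> R) (g : T -> nat) (M : nat) :
  (forall t, g t < M)%N ->
  \sum_t pi t * (g t)%:R = \sum_(k < M) (\sum_(t | g t == k) pi t) * k%:R.
Proof.
move=> hg.
under [RHS]eq_bigr do rewrite mulr_suml big_mkcond /=.
rewrite exchange_big /=; apply: eq_bigr => t _.
rewrite (bigD1 (Ordinal (hg t))) //= eqxx big1 ?addr0 // => k hk.
have -> : (g t == val k) = false.
  by apply/negbTE; apply: contra hk => /eqP h; apply/eqP/val_inj; rewrite /= h.
by [].
Qed.

Lemma part_state (R : archiRealFieldType) (S : finType) (N : nat) (x : 'I_N -> S)
   (w : 'I_N -> R) (G : S -> R) :
  \sum_i w i * G (x i) = \sum_s (\sum_i (x i == s)%:R * w i) * G s.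
Proof.
under [RHS]eq_bigr do rewrite mulr_suml.
rewrite exchange_big /=; apply: eq_bigr => i _.
rewrite (bigD1 (x i)) //= eqxx mul1r big1 ?addr0 // => s hs.
by rewrite eq_sym (negbTE hs) mul0r mul0r.
Qed.

Theorem lemma1 (R : archiRealFieldType) (S : finType)
    (P : S -> bool -> S -> R) (r : S -> bool -> R) (alpha : R)
    (ystar : S -> bool -> R) (stilde : S) (N : nat)
    (x : config S N) (pi : actvec N -> R) :
  stochastic P ->
  0 < alpha < 1 ->
  (0 < N)%N ->
  (exists K : nat, alpha * N%:R = K%:R) ->
  lp_optimal P r alpha ystar ->
  (* Assumption 2 *)
  0 < ystar stilde false -> 0 < ystar stilde true ->
  (forall s, 0 < ystar s false -> 0 < ystar s true -> s = stilde) ->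
  olc_condition ystar alpha stilde x ->
  OLC_law ystar alpha x pi ->
  forall s' : S,
    expected_next P x pi s' - mustar ystar s'
    = \sum_(s : S) (Xfrac x s - mustar ystar s) * Phi P ystar alpha stilde s s'.
Proof.
move=> hP /andP[a0 a1] N0 [K hK] [[y0 ysum1 ystat ytot] _] yst0 yst1 huniq _
  [[pi0 pisum] hsupp hB hE] s'.
have NR : (N%:R : R) != 0 by rewrite pnatr_eq0 -lt0n.
pose c s := pibar ystar true s.
pose z s := ((zcount x s)%:R : R).
pose m s := \sum_u pi u * ((nactive_in x u s)%:R : R).
pose D s := P s true s' - P s false s'.
pose P0 s := P s false s'.
have zE : forall s, z s = \sum_i (x i == s)%:R by move=> s; rewrite /z /zcount card_ind.
have nE : forall u s, ((nactive_in x u s)%:R : R) = \sum_i (x i == s)%:R * (u i)%:R.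
  move=> u s; rewrite /nactive_in card_ind; apply: eq_bigr => i _.
  by case: (x i == s); case: (u i); rewrite /= ?mul1r ?mul0r.
have zsum : \sum_s z s = N%:R.
  under eq_bigr do rewrite zE.
  rewrite exchange_big /= (eq_bigr (fun _ => 1)); last first.
    move=> i _; rewrite (bigD1 (x i)) //= eqxx big1 ?addr0 // => s hs.
    by rewrite eq_sym (negbTE hs).
  by rewrite sumr_const card_ord.
have cardN : forall (b : pred 'I_N), (#|[set i | b i]| < N.+1)%N.
  by move=> b; rewrite ltnS -[X in (_ <= X)%N](card_ord N) max_card.
have Fu : forall u : actvec N, \sum_i P (x i) (u i) s'
    = \sum_s z s * P0 s + \sum_s ((nactive_in x u s)%:R : R) * D s.
  move=> u.
  rewrite (eq_bigr (fun i => 1 * P0 (x i) + (u i)%:R * D (x i))); last first.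
    by move=> i _; rewrite /P0 /D; case: (u i); rewrite /= ?mul1r ?mul0r; ring.
  rewrite big_split /= !part_state; congr (_ + _); apply: eq_bigr => s _.
    by rewrite zE; congr (_ * _); apply: eq_bigr => i _; rewrite mulr1.
  by rewrite nE.
have LHS : expected_next P x pi s'
    = (\sum_s z s * P0 s + \sum_s m s * D s) / N%:R.
  rewrite /expected_next.
  under eq_bigr do rewrite next_u // Fu mulrA.
  rewrite -mulr_suml; congr (_ / _).
  under eq_bigr do rewrite mulrDr.
  rewrite big_split /= -mulr_suml pisum mul1r; congr (_ + _).
  under eq_bigr do rewrite mulr_sumr.
  rewrite exchange_big /=; apply: eq_bigr => s _.
  by rewrite /m mulr_suml; apply: eq_bigr => u _; rewrite mulrA.
have hm : forall s, s != stilde -> m s = c s * z s.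
  move=> s hs.
  have yf0 := y0 s false; have yt0 := y0 s true.
  case: (ltP 0 (ystar s true)) => ht.
    have yf : ystar s false = 0.
      apply/eqP; rewrite eq_le yf0 andbT leNgt; apply/negP => hf.
      by move/eqP: hs; apply; apply: huniq.
    have -> : c s = 1 by rewrite /c /pibar yf add0r ht divff // gt_eqF.
    rewrite mul1r /m (eq_bigr (fun u => pi u * z s)); first by rewrite -mulr_suml pisum mul1r.
    move=> u _; case: (eqVneq (pi u) 0) => [->|pu]; first by rewrite !mul0r.
    congr (_ * _); rewrite nE zE; apply: eq_bigr => i _.
    case: (eqVneq (x i) s) => [xi|]; last by rewrite !mul0r.
    have hu : u i = true by apply: (proj1 (hsupp u pu i)); rewrite /Splus xi ht yf eqxx.
    by rewrite hu mulr1.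
  have yt : ystar s true = 0 by apply/eqP; rewrite eq_le yt0 andbT.
  case: (ltP 0 (ystar s false)) => hf.
    have -> : c s = 0 by rewrite /c /pibar yt addr0 hf mul0r.
    rewrite mul0r /m big1 // => u _.
    case: (eqVneq (pi u) 0) => [->|pu]; first by rewrite !mul0r.
    rewrite nE big1 ?mulr0 // => i _.
    case: (eqVneq (x i) s) => [xi|]; last by rewrite !mul0r.
    have hu : u i = false by apply: (proj2 (hsupp u pu i)); rewrite /Sminus xi yt hf eqxx.
    by rewrite hu mulr0.
  have yf : ystar s false = 0 by apply/eqP; rewrite eq_le yf0 andbT.
  have -> : c s = 1 / 2 by rewrite /c /pibar yt yf addr0 ltxx.
  have se : Sempty ystar s by rewrite /Sempty yt yf eqxx.
  rewrite /m (@expect_nat _ _ _ _ N.+1); last by move=> u; apply: cardN.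
  under eq_bigr do rewrite hE //.
  rewrite (eq_bigr (fun k : 'I_N.+1 => (k%:R : R) * rround_pmf (z s / 2) k)); last first.
    by move=> k _; rewrite mulrC.
  rewrite rround_mean.
  - by rewrite mulrC mul1r.
  - by rewrite divr_ge0 // /z ler0n.
  - rewrite ler_pdivrMr // (le_trans (y := N%:R)) //.
      by rewrite /z ler_nat -[X in (_ <= X)%N](card_ord N) max_card.
    by rewrite ler_peMr // ler1n.
have aN0 : 0 <= alpha * N%:R by rewrite mulr_ge0 // ltW.
have aNN : alpha * N%:R <= N%:R by apply: ler_piMl; rewrite ?ler0n ?ltW.
have hmsum : \sum_s m s = alpha * N%:R.
  rewrite /m exchange_big /=.
  under eq_bigr do rewrite -mulr_sumr.
  rewrite (eq_bigr (fun u => pi u * (nactive u)%:R)); last first.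
    move=> u _; congr (_ * _); rewrite /nactive card_ind.
    under eq_bigr do rewrite nE.
    rewrite exchange_big /=; apply: eq_bigr => i _.
    rewrite -mulr_suml (bigD1 (x i)) //= eqxx big1 ?addr0 ?mul1r // => s hs.
    by rewrite eq_sym (negbTE hs).
  rewrite (@expect_nat _ _ _ _ N.+1); last by move=> u; apply: cardN.
  under eq_bigr do rewrite hB mulrC.
  exact: rround_mean.
have hmD : \sum_s m s * D s
    = \sum_s c s * z s * D s + (alpha * N%:R - \sum_s c s * z s) * D stilde.
  have e1 : \sum_(s | s != stilde) m s = \sum_(s | s != stilde) c s * z s.
    by apply: eq_bigr => s hs; rewrite hm.
  have e2 : \sum_(s | s != stilde) m s * D s = \sum_(s | s != stilde) c s * z s * D s.
    by apply: eq_bigr => s hs; rewrite hm.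
  move: hmsum; rewrite (bigD1 stilde) //= e1 => hmsum.
  rewrite (bigD1 stilde) //= e2 [in RHS](bigD1 stilde) //= [in RHS](bigD1 stilde (F := fun s => c s * z s)) //=.
  have -> : m stilde = alpha * N%:R - \sum_(s | s != stilde) c s * z s.
    by rewrite -hmsum addrK.
  ring.
have g1 : forall s, mustar ystar s * c s = ystar s true.
  move=> s; rewrite /mustar /c /pibar.
  case: ifP => h; first by rewrite mulrC divfK // gt_eqF.
  have yf0 := y0 s false; have yt0 := y0 s true.
  have : ystar s false + ystar s true = 0.
    by apply/eqP; rewrite eq_le addr_ge0 // andbT leNgt h.
  move=> e; rewrite e mul0r; apply/eqP; rewrite eq_sym eq_le yt0 andbT.
  by rewrite -e lerDr.
have cf : forall s, pibar ystar false s = 1 - c s.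
  move=> s; rewrite /c /pibar; case: ifP => h; last by field.
  by field; rewrite gt_eqF.
have g2 : forall s, mustar ystar s * (P0 s + c s * D s)
    = ystar s true * P s true s' + ystar s false * P s false s'.
  move=> s; rewrite mulrDr mulrA g1 /P0 /D.
  have -> : mustar ystar s = ystar s false + ystar s true by [].
  ring.
have PhiE : forall s, Phi P ystar alpha stilde s s'
    = P0 s + c s * D s - mustar ystar s' - (c s - alpha) * D stilde.
  move=> s; rewrite /Phi /Ppibar big_bool /= cf /P0 /D /c; ring.
set mu' := mustar ystar s'.
set Dst := D stilde.
pose T s := N%:R^-1 * (z s * P0 s) + N%:R^-1 * (c s * z s * D s)
   + (- mu' / N%:R + alpha * Dst / N%:R) * z s + (- Dst / N%:R) * (c s * z s)
   + (-1) * (ystar s true * P s true s' + ystar s false * P s false s')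
   + (mu' - alpha * Dst) * mustar ystar s + Dst * ystar s true.
have hT : forall s, (Xfrac x s - mustar ystar s) * Phi P ystar alpha stilde s s' = T s.
  move=> s; rewrite PhiE -/mu' -/Dst /T -g2 -g1 /Xfrac -/(z s).
  clear T; move: (z s) (c s) (P0 s) (D s) (mustar ystar s) mu' Dst => a b e f g h k. rewrite !mulNr !mul1r. ring.
rewrite (eq_bigr _ (fun s _ => hT s)) /T !big_split /= -!mulr_sumr.
have musum : \sum_s mustar ystar s = 1.
  rewrite -ytot; apply: eq_bigr => s _; rewrite big_bool /mustar /=; ring.
have stat : \sum_s (ystar s true * P s true s' + ystar s false * P s false s') = mu'.
  rewrite /mu' /mustar -(eq_bigr _ (fun s _ => big_bool _ (fun a => ystar s a * P s a s'))).
  by rewrite ystat big_bool addrC.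
rewrite musum stat ysum1 zsum LHS hmD.
rewrite -/Dst; clear T hT stat; move: (\sum_i z i * P0 i) (\sum_i c i * z i * D i) (\sum_i c i * z i) Dst mu' => A B C d w.
by field.
Qed.
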